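(* Let $\mathcal{S}\subset\mathbb{R}^n$ be compact convex with $\|x\|\le D$ for $x\in\mathcal{S}$, and let $f_1,\dots,f_T:\mathcal{S}\to\mathbb{R}$ be differentiable, $\ell$-strongly convex and $u$-smooth with $\|\nabla f_t(x)\|\le G$ on $\mathcal{S}$. Let $\theta_1\in\mathcal{S}$ and $\theta_{t+1}=\operatorname{argmin}_{\theta\in\mathcal{S}}\|\theta-(\theta_t-\eta_t\nabla f_t(\theta_t))\|^2$ with $\eta_t=\frac{1-\gamma}{\ell(\gamma-\gamma^t)+u(1-\gamma)}$ and $1-\gamma=1/T^\beta$, $\beta\in(0,1)$. Let $\theta^*$ minimize $\sum_{t=1}^Tf_t$ over $\mathcal{S}$. Then $$\sum_{t=1}^T\big(f_t(\theta_t)-f_t(\theta^* )\big)\le O(T^{1-\beta}).$$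
   Context: $\ell$-strongly convex: $f(y)\ge f(x)+\nabla f(x)^\top(y-x)+\frac\ell2\|x-y\|^2$; $u$-smooth: $\nabla f$ is $u$-Lipschitz. $O(\cdot)$ hides constants depending only on $\ell,u,G,D,\beta$. *)

(* Defs.v *)
From HB Require Import structures.
From mathcomp Require Import all_boot all_order all_algebra.
From mathcomp Require Import all_classical all_reals all_analysis.
Set Implicit Arguments. Unset Strict Implicit. Unset Printing Implicit Defensive.
Import Order.TTheory GRing.Theory Num.Theory numFieldNormedType.Exports.
Local Open Scope ring_scope.
Local Open Scope classical_set_scope.

Definition dotv (R : realType) (n : nat) (x y : 'rV[R]_n) : R :=
  \sum_(i < n) x ord0 i * y ord0 i.

Definition enorm (R : realType) (n : nat) (x : 'rV[R]_n) : R :=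
  Num.sqrt (dotv x x).

Definition has_gradient (R : realType) (n : nat) (f : 'rV[R]_n -> R)
    (x g : 'rV[R]_n) : Prop :=
  differentiable f x /\ forall v, 'd f x v = dotv g v.

(* Main.v *)
Require Import Defs.
From HB Require Import structures.
From mathcomp Require Import all_boot all_order all_algebra.
From mathcomp Require Import all_classical all_reals all_analysis.
From mathcomp Require Import ring lra.
Import Order.TTheory GRing.Theory Num.Theory numFieldNormedType.Exports.
Local Open Scope ring_scope.
Local Open Scope classical_set_scope.

Set Implicit Arguments. Unset Strict Implicit.

Section dot.
Variables (R : realType) (n : nat).
Implicit Types x y z : 'rV[R]_n.

Lemma dotvDl x y z : dotv (x + y) z = dotv x z + dotv y z.
Proof. by rewrite /dotv -big_split; apply: eq_bigr => i _; rewrite mxE mulrDl. Qed.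
Lemma dotvZl (c : R) x z : dotv (c *: x) z = c * dotv x z.
Proof. by rewrite /dotv mulr_sumr; apply: eq_bigr => i _; rewrite mxE mulrA. Qed.
Lemma dotvC x y : dotv x y = dotv y x.
Proof. by rewrite /dotv; apply: eq_bigr => i _; rewrite mulrC. Qed.
Lemma dotvNl x z : dotv (- x) z = - dotv x z.
Proof. by rewrite -scaleN1r dotvZl mulN1r. Qed.
Lemma dotvBl x y z : dotv (x - y) z = dotv x z - dotv y z.
Proof. by rewrite dotvDl dotvNl. Qed.
Lemma dotvDr x y z : dotv z (x + y) = dotv z x + dotv z y.
Proof. by rewrite dotvC dotvDl !(dotvC z). Qed.
Lemma dotvBr x y z : dotv z (x - y) = dotv z x - dotv z y.
Proof. by rewrite dotvC dotvBl !(dotvC z). Qed.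
Lemma dotvZr (c : R) x z : dotv z (c *: x) = c * dotv z x.
Proof. by rewrite dotvC dotvZl dotvC. Qed.
Lemma dotvNr x z : dotv z (- x) = - dotv z x.
Proof. by rewrite dotvC dotvNl dotvC. Qed.
Lemma dotv_ge0 x : 0 <= dotv x x.
Proof. by rewrite /dotv sumr_ge0 // => i _; rewrite -expr2 sqr_ge0. Qed.
Lemma enorm2 x : enorm x ^+ 2 = dotv x x.
Proof. by rewrite /enorm sqr_sqrtr // dotv_ge0. Qed.
Lemma enorm_ge0 x : 0 <= enorm x.
Proof. exact: sqrtr_ge0. Qed.
End dot.

Lemma conv_test (R : realType) n (x y : 'rV[R]_n) (s : R) (h0 : 0 <= s) (h1 : s <= 1) :
  @conv R (convex_lmodType _) (Itv01 h0 h1) x y = s *: x + (1 - s) *: y.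
Proof. reflexivity. Qed.

Lemma dot_expand (R : realType) n (a b : 'rV[R]_n) (s : R) :
  dotv (a + s *: b) (a + s *: b) = dotv a a + 2 * s * dotv a b + s ^+ 2 * dotv b b.
Proof.
rewrite !dotvDl !dotvDr !dotvZl !dotvZr (dotvC b a). ring.
Qed.

Lemma proj_nonexp (R : realType) n (S : set 'rV[R]_n) (p z y : 'rV[R]_n) :
  convex_set S -> S p -> S y ->
  (forall y, S y -> enorm (p - z) ^+ 2 <= enorm (y - z) ^+ 2) ->
  dotv (p - y) (p - y) <= dotv (z - y) (z - y).
Proof.
move=> cS Sp Sy H.
set A := dotv (p - z) (y - p).
set B := dotv (y - p) (y - p).
have B0 : 0 <= B by apply: dotv_ge0.
have key : forall s : R, 0 <= s -> s <= 1 -> 0 <= 2 * s * A + s ^+ 2 * B.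
  move=> s h0 h1.
  have Sq : S (@conv R (convex_lmodType _) (Itv01 h0 h1) y p).
    by apply: set_mem; apply: cS; apply: mem_set.
  have := H _ Sq; rewrite !enorm2.
  have -> : @conv R (convex_lmodType _) (Itv01 h0 h1) y p - z = (p - z) + s *: (y - p).
    apply/rowP => i; rewrite !mxE /= /unstable.onem; ring.
  rewrite dot_expand -/A -/B; lra.
have A0 : 0 <= A.
  rewrite leNgt; apply/negP => An.
  have hd : 0 < B - 2 * A by lra.
  have h0 : 0 <= - A / (B - 2 * A) by rewrite divr_ge0 //; lra.
  have h1 : - A / (B - 2 * A) <= 1 by rewrite ler_pdivrMr //; lra.
  have := key _ h0 h1.
  set s := - A / (B - 2 * A).
  have hs : s * (B - 2 * A) = - A by rewrite /s divfK // gt_eqF.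
  have sp : 0 < s by rewrite /s divr_gt0 //; lra.
  have e : s ^+ 2 * B = s * (2 * s * A - A).
    have : s * B = 2 * s * A - A by move: hs; rewrite mulrBr; lra.
    by move=> <-; rewrite expr2 mulrA.
  rewrite e => hh.
  have h3 : s * A < 0 by rewrite pmulr_rlt0.
  have h4 : s * (s * A) < 0 by rewrite pmulr_rlt0.
  nra.
have -> : z - y = (p - y) + (-1) *: (p - z).
  by apply/rowP => i; rewrite !mxE; ring.
rewrite dot_expand.
have -> : dotv (p - y) (p - z) = - A.
  rewrite /A.
  have -> : y - p = - (p - y) by rewrite opprB.
  by rewrite dotvNr opprK dotvC.
have : 0 <= dotv (p - z) (p - z) by apply: dotv_ge0.
nra.
Qed.

Lemma harm_ln (R : realType) (N : nat) : (0 < N)%N ->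
  \sum_(1 <= t < N.+1) (t%:R : R)^-1 <= 1 + ln (N%:R : R).
Proof.
elim: N => [//|N IH] _.
case: N IH => [|N] IH.
  by rewrite big_nat1 invr1 ln1 addr0.
rewrite big_nat_recr //=.
have {}IH := IH isT.
have e : (N.+2%:R : R) = N.+1%:R + 1 by rewrite -addn1 natrD.
rewrite e in IH *.
set x := (N.+1%:R : R) in IH *.
have hp : 0 < x by rewrite ltr0n.
have hp2 : 0 < x + 1 by lra.
have : ln (1 + (x / (x + 1) - 1)) <= x / (x + 1) - 1.
  apply: le_ln1Dx.
  have : 0 < x / (x + 1) by apply: divr_gt0.
  lra.
rewrite [1 + _]addrC subrK ln_div ?posrE //.
have -> : x / (x + 1) - 1 = - (x + 1)^-1.
  field. by rewrite lt0r_neq0.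
lra.
Qed.

Lemma powR_ge1 (R : realType) (N : R) (e : R) : 1 <= N -> 0 <= e -> 1 <= N `^ e.
Proof. by move=> N1 e0; rewrite -(powRr0 N); apply: ler_powR. Qed.

Lemma harm_pow (R : realType) (N : nat) (e : R) : (0 < N)%N -> 0 < e ->
  \sum_(1 <= t < N.+1) (t%:R : R)^-1 <= (1 + e^-1) * (N%:R : R) `^ e.
Proof.
move=> N0 e0.
apply: (le_trans (harm_ln R N0)).
have N1 : (1 : R) <= N%:R by rewrite ler1n.
have p1 := powR_ge1 N1 (ltW e0).
have hl : ln (N%:R : R) <= e^-1 * N%:R `^ e.
  have h := @ln_sublinear R (N%:R `^ e) (lt_le_trans ltr01 p1).
  rewrite ln_powR in h.
  rewrite ler_pdivlMl //; lra.
nra.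
Qed.

Lemma bern (R : realType) (a : R) (t : nat) : 0 <= a <= 1 ->
  (1 - a) ^+ t * (1 + t%:R * a) <= 1.
Proof.
move=> /andP[a0 a1].
elim: t => [|t IH]; first by rewrite expr0 mul0r addr0 mul1r.
have p : 0 <= (1 - a) ^+ t by apply: exprn_ge0; lra.
rewrite exprS -mulrA.
apply: le_trans IH.
rewrite mulrCA ler_wpM2l //.
rewrite -addn1 natrD.
have : (0 : R) <= t%:R by rewrite ler0n.
nra.
Qed.

Lemma eta_bound (R : realType) (l u m a x : R) (t : nat) :
  0 < m -> m <= l -> m <= u -> 0 < a <= 1 -> (0 < t)%N ->
  0 <= x -> x <= 1 - a -> x * (1 + t%:R * a) <= 1 ->
  a / (l * (1 - a - x) + u * a) <= ((t%:R)^-1 + a) / m.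
Proof.
move=> m0 ml mu /andP[a0 a1] t0 x0 xg xb.
have tp : 0 < (t%:R : R) by rewrite ltr0n.
have Dn : m * (1 - x) <= l * (1 - a - x) + u * a by nra.
have key : t%:R * a <= (1 + t%:R * a) * (1 - x) by nra.
have Dp : 0 < l * (1 - a - x) + u * a.
  have : 0 < t%:R * a by apply: mulr_gt0.
  nra.
rewrite ler_pdivrMr // mulrAC ler_pdivlMr //.
apply: (le_trans _ (ler_wpM2l _ Dn)); last first.
  by apply: addr_ge0; [rewrite invr_ge0 ltW | rewrite ltW].
have ht : a <= (t%:R^-1 + a) * (1 - x).
  have -> : (t%:R^-1 + a) = t%:R^-1 * (1 + t%:R * a).
    by field; rewrite lt0r_neq0.
  rewrite -mulrA ler_pdivlMl //.
rewrite [X in _ <= X]mulrCA [a * m]mulrC; apply: ler_wpM2l => //; exact: ltW.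
Qed.

Lemma step_scal (R : realType) (l w e X dt dt1 g2 r : R) : 0 < w -> 2 * w * e = 1 ->
  dt1 <= dt + 2 * (- e) * X + e ^+ 2 * g2 -> r <= X - l / 2 * dt ->
  r <= w * dt - w * dt1 - l / 2 * dt + e / 2 * g2.
Proof.
move=> w0 we h3 h4.
have h5 := ler_wpM2l (ltW w0) h3.
have hh : w * (dt + 2 * - e * X + e ^+ 2 * g2) = w * dt - X + e / 2 * g2.
  have e1 : w * e = 1 / 2 by lra.
  rewrite mulrDr mulrDr expr2.
  have -> : w * (2 * - e * X) = - 2 * (w * e) * X by ring.
  have -> : w * (e * e * g2) = (w * e) * e * g2 by ring.
  by rewrite e1; field.
rewrite hh in h5.
lra.
Qed.

Lemma wstep (R : realType) (l u a x : R) : 0 < a -> 0 <= x <= 1 -> 0 < l ->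
  (l * (1 - a - (1 - a) * x) + u * a) / (2 * a) - l / 2 <= (l * (1 - a - x) + u * a) / (2 * a).
Proof.
move=> a0 /andP[x0 x1] l0.
have -> : (l * (1 - a - (1 - a) * x) + u * a) / (2 * a) =
   (l * (1 - a - x) + u * a) / (2 * a) + l * x / 2.
  by field; rewrite lt0r_neq0.
have : l * x <= l by rewrite ler_piMr // ltW.
lra.
Qed.

Unset Implicit Arguments. Set Strict Implicit.

Theorem theorem3p5 (R : realType) (l u G D beta : R) :
  0 < l -> 0 < u -> 0 < beta < 1 ->
  exists C : R, forall (n T : nat) (S : set 'rV[R]_n)
    (f : nat -> 'rV[R]_n -> R) (grad : nat -> 'rV[R]_n -> 'rV[R]_n)
    (theta : nat -> 'rV[R]_n) (theta_star : 'rV[R]_n),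
    (0 < T)%N ->
    compact S -> convex_set S ->
    (forall x, S x -> enorm x <= D) ->
    (forall t, (1 <= t <= T)%N -> forall x, S x -> has_gradient (f t) x (grad t x)) ->
    (forall t, (1 <= t <= T)%N -> forall x y, S x -> S y ->
       f t y >= f t x + dotv (grad t x) (y - x) + l / 2 * enorm (x - y) ^+ 2) ->
    (forall t, (1 <= t <= T)%N -> forall x y, S x -> S y ->
       enorm (grad t x - grad t y) <= u * enorm (x - y)) ->
    (forall t, (1 <= t <= T)%N -> forall x, S x -> enorm (grad t x) <= G) ->
    let gamma := 1 - ((T%:R : R) `^ beta)^-1 in
    let eta := fun t : nat =>
      (1 - gamma) / (l * (gamma - gamma ^+ t) + u * (1 - gamma)) in
    S (theta 1%N) ->
    (forall t, (1 <= t <= T)%N ->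
       S (theta t.+1) /\
       forall y, S y ->
         enorm (theta t.+1 - (theta t - eta t *: grad t (theta t))) ^+ 2
         <= enorm (y - (theta t - eta t *: grad t (theta t))) ^+ 2) ->
    S theta_star ->
    (forall y, S y ->
       \sum_(1 <= t < T.+1) f t theta_star <= \sum_(1 <= t < T.+1) f t y) ->
    \sum_(1 <= t < T.+1) (f t (theta t) - f t theta_star)
      <= C * (T%:R : R) `^ (1 - beta).
Proof.
move=> l0 u0 /andP[b0 b1].
pose m := l * u / (l + u).
have m0 : 0 < m by rewrite /m divr_gt0 ?mulr_gt0 ?addr_gt0.
have ml : m <= l by rewrite /m ler_pdivrMr ?addr_gt0 //; nra.
have mu : m <= u by rewrite /m ler_pdivrMr ?addr_gt0 //; nra.
pose eps := 1 - beta.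
have eps0 : 0 < eps by rewrite /eps; lra.
exists (2 * u * D ^+ 2 + G ^+ 2 / (2 * m) * (2 + eps^-1)).
move=> n T S f grad theta ts T0 _ cS hD _ hsc _ hG gamma eta h1 hproj hts _.
have T1 : (1 : R) <= T%:R by rewrite ler1n.
have pb : 1 <= (T%:R : R) `^ beta by apply: powR_ge1 => //; exact: ltW.
pose a := ((T%:R : R) `^ beta)^-1.
have aP : a * (T%:R `^ beta) = 1 by rewrite /a mulVf // gt_eqF // (lt_le_trans ltr01).
have a0 : 0 < a by rewrite /a invr_gt0 (lt_le_trans ltr01).
have a1 : a <= 1 by nra.
have ga : gamma = 1 - a by [].
have e1 : 1 - gamma = a by rewrite ga; ring.
have Ta : T%:R * a = (T%:R : R) `^ eps.
  rewrite /eps powRB; last by apply/implyP => _; rewrite pnatr_eq0 -lt0n.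
  by rewrite powRr1 ?ler0n.
have pe : 1 <= (T%:R : R) `^ eps by apply: powR_ge1 => //; exact: ltW.
have g0 : 0 <= gamma by rewrite ga; lra.
have g1 : gamma <= 1 by rewrite ga; lra.
have gxP : forall t, (0 < t)%N -> 0 <= gamma ^+ t /\ gamma ^+ t <= gamma /\
    gamma ^+ t * (1 + t%:R * a) <= 1.
  move=> [//|k] _; split; first exact: exprn_ge0.
  split; last by rewrite ga; apply: bern; rewrite ltW ?a0.
  by rewrite exprS ler_piMr // exprn_ile1.
pose Dn t := l * (gamma - gamma ^+ t) + u * a.
have Dp : forall t, (0 < t)%N -> 0 < Dn t.
  move=> t /gxP [_ [h _]]; rewrite /Dn.
  have : 0 < u * a by apply: mulr_gt0.
  have : 0 <= l * (gamma - gamma ^+ t) by apply: mulr_ge0; lra.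
  lra.
have ea : forall t, eta t = a / Dn t by move=> t; rewrite /eta e1.
pose w t := Dn t / (2 * a).
have w0 : forall t, (0 < t)%N -> 0 < w t.
  by move=> t /Dp h; rewrite /w divr_gt0 // mulr_gt0.
have we : forall t, (0 < t)%N -> 2 * w t * eta t = 1.
  move=> t /Dp h; rewrite ea /w; field.
  by rewrite !gt_eqF.
pose d t := dotv (theta t - ts) (theta t - ts).
have d0 : forall t, 0 <= d t by move=> t; apply: dotv_ge0.
pose Q t := if t is k.+1 then w t * d t.+1 else u / 2 * d 1%N.
have St : forall t, (1 <= t <= T.+1)%N -> S (theta t).
  move=> [//|[//|k]] hk.
  by case: (hproj k.+1 hk).
have HQ : forall t, (0 < t)%N -> Q t = w t * d t.+1 by case.
have HQ1 : forall t, (0 < t)%N -> (w t - l / 2) * d t <= Q t.-1.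
    case => [//|[|k]] _.
      rewrite /= /w /Dn expr1 subrr mulr0 add0r.
      have -> : u * a / (2 * a) = u / 2 by field; rewrite gt_eqF.
      have := d0 1%N; nra.
    rewrite /=.
    have dd := d0 k.+2.
    apply: ler_wpM2r => //.
    rewrite /w /Dn ga exprS.
    apply: wstep => //.
    have [hx1 [hx2 _]] := gxP k.+1 isT.
    by rewrite hx1 /=; rewrite ga in hx2; lra.
have step : forall t, (1 <= t < T.+1)%N ->
    f t (theta t) - f t ts <= (Q t.-1 - Q t) + eta t / 2 * G ^+ 2.
  move=> t /andP[t1 tT]; rewrite ltnS in tT.
  have htT : (1 <= t <= T)%N by rewrite t1 tT.
  have Stt : S (theta t) by apply: St; rewrite t1 ltnW.
  have [St1 hp] := hproj t htT.
  have hpr := proj_nonexp cS St1 hts hp.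
  set g := grad t (theta t) in hpr.
  have E1 : theta t - eta t *: g - ts = (theta t - ts) + (- eta t) *: g.
    by apply/rowP => i; rewrite !mxE; ring.
  rewrite E1 dot_expand sqrrN in hpr.
  have hs := hsc t htT (theta t) ts Stt hts.
  rewrite enorm2 -/g in hs.
  have E2 : ts - theta t = - (theta t - ts) by rewrite opprB.
  rewrite E2 dotvNr (dotvC g) in hs.
  have hg := hG t htT (theta t) Stt; rewrite -/g in hg.
  have gg : dotv g g <= G ^+ 2.
    rewrite -enorm2; have := enorm_ge0 g; nra.
  have t0 : (0 < t)%N by [].
  have := step_scal (w0 t t0) (we t t0) hpr (r := f t (theta t) - f t ts) (l := l) _.
  move=> /(_ ltac:(lra)) H.
  have eta0 : 0 <= eta t by rewrite ea ltW // divr_gt0 // Dp.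
  have H3 : eta t / 2 * dotv g g <= eta t / 2 * G ^+ 2.
    by rewrite ler_wpM2l // divr_ge0.
  have HQ1t := HQ1 t t0.
  rewrite (HQ t t0) /d; rewrite /d in HQ1t.
  lra.
apply: (le_trans (ler_sum_nat step)).
rewrite big_split /=.
rewrite (@telescope_sumr_eq _ 1 T.+1 (fun k => - Q k.-1)) //; last first.
  by move=> k _; rewrite /= opprK addrC.
rewrite /= opprK.
rewrite -mulr_suml -mulr_suml.
have Heta : \sum_(1 <= t < T.+1) eta t <= (\sum_(1 <= t < T.+1) (t%:R : R)^-1 + T%:R * a) / m.
  have H := @ler_sum_nat R 1 T.+1 eta (fun t => ((t%:R)^-1 + a) / m).
  apply: le_trans (H _) _.
    move=> t /andP[t1 _]; rewrite ea /Dn ga.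
    have [hx1 [hx2 hx3]] := gxP t t1.
    apply: eta_bound => //; first by rewrite a0 a1.
  by rewrite -mulr_suml big_split /= sumr_const_nat subSS subn0 mulr_natl.
have harm := harm_pow T0 eps0.
have QT : 0 <= Q T by rewrite (HQ T T0); apply: mulr_ge0; [exact: ltW (w0 T T0) | exact: d0].
have dD : forall x, S x -> dotv x x <= D ^+ 2.
  move=> x Sx; rewrite -enorm2; have := hD _ Sx; have := enorm_ge0 x; nra.
have Q0 : Q 0%N <= 2 * u * D ^+ 2.
  have par : d 1%N + dotv (theta 1%N + ts) (theta 1%N + ts) =
      2 * dotv (theta 1%N) (theta 1%N) + 2 * dotv ts ts.
    rewrite /d !dotvDl !dotvDr !dotvNl !dotvNr (dotvC ts); ring.
  have := dotv_ge0 (theta 1%N + ts).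
  have := dD _ h1; have := dD _ hts.
  rewrite /=; nra.
rewrite Ta in Heta.
rewrite -/eps.
set P := (T%:R : R) `^ eps in Heta harm pe *.
set Se := \sum_(1 <= t < T.+1) eta t in Heta *.
set H := \sum_(1 <= t < T.+1) (t%:R : R)^-1 in Heta harm *.
have K0 : 0 <= G ^+ 2 / (2 * m) by rewrite divr_ge0 ?sqr_ge0 // mulr_ge0 // ltW.
have s1 : Se / 2 * G ^+ 2 <= G ^+ 2 / (2 * m) * (H + P).
  have : Se * (G ^+ 2 / 2) <= (H + P) / m * (G ^+ 2 / 2).
    by apply: ler_wpM2r => //; rewrite divr_ge0 ?sqr_ge0.
  have -> : (H + P) / m * (G ^+ 2 / 2) = G ^+ 2 / (2 * m) * (H + P).
    by field; rewrite gt_eqF.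
  have -> : Se / 2 * G ^+ 2 = Se * (G ^+ 2 / 2) by ring.
  done.
have s2 : G ^+ 2 / (2 * m) * (H + P) <= G ^+ 2 / (2 * m) * ((2 + eps^-1) * P).
  by apply: ler_wpM2l => //; lra.
have s3 : 2 * u * D ^+ 2 <= 2 * u * D ^+ 2 * P.
  have : 0 <= 2 * u * D ^+ 2 by rewrite mulr_ge0 ?sqr_ge0 // mulr_ge0 // ltW.
  nra.
have Q0' : u / 2 * d 1%N <= 2 * u * D ^+ 2 := Q0.
lra.
Qed.
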